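(* For $\alpha\in\mathbb{K}^\times$ let $A_{3,\alpha}$ be the evolution algebra over the field $\mathbb{K}$ with natural basis $\{e_1,e_2\}$ such that $e_1^2=e_1$ and $e_2^2=\alpha e_1+e_2$. For $\alpha,\alpha'\in\mathbb{K}^\times$, $A_{3,\alpha}$ is isomorphic to $A_{3,\alpha'}$ as a $\mathbb{K}$-algebra if and only if $\alpha=\alpha'$.
   Context: An evolution algebra over $\mathbb{K}$ is a $\mathbb{K}$-algebra with a basis $\{e_i\}$ (natural basis) such that $e_ie_j=0$ for $i\neq j$. *)

(* Defs.v *)
From mathcomp Require Import all_boot all_order all_algebra.
Set Implicit Arguments. Unset Strict Implicit. Unset Printing Implicit Defensive.
Import GRing.Theory.
Local Open Scope ring_scope.

(* Evolution algebra on K^n (row vectors) with natural basis e_i = 'e_i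
   (delta_mx 0 i) and structure matrix C: e_i * e_i = \sum_k C i k e_k,
   e_i * e_j = 0 for i <> j. *)
Definition evo_mul (K : fieldType) (n : nat) (C : 'M[K]_n) (x y : 'rV[K]_n)
  : 'rV[K]_n := \sum_(i < n) (x 0 i * y 0 i) *: row i C.

Definition A3_mx (K : fieldType) (a : K) : 'M[K]_2 :=
  \matrix_(i < 2, j < 2)
     (if (i == 0 :> nat) then (if (j == 0 :> nat) then 1 else 0)
      else (if (j == 0 :> nat) then a else 1)).

Definition evo_iso (K : fieldType) (n : nat) (C D : 'M[K]_n) : Prop :=
  exists f : 'rV[K]_n -> 'rV[K]_n,
    [/\ (forall (c : K) (u v : 'rV[K]_n), f (c *: u + v) = c *: f u + f v),
        bijective f &
        forall x y, f (evo_mul C x y) = evo_mul D (f x) (f y)].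

(* Main.v *)
Require Import Defs.
From mathcomp Require Import all_boot all_order all_algebra.
From mathcomp Require Import ring.
Import GRing.Theory.
Local Open Scope ring_scope.

Lemma mulE (K : fieldType) (a : K) (x y : 'rV[K]_2) j :
  evo_mul (A3_mx a) x y 0 j =
  if j == 0 then x 0 0 * y 0 0 + a * (x 0 1 * y 0 1) else x 0 1 * y 0 1.
Proof.
rewrite /evo_mul summxE big_ord_recr big_ord1 /= !mxE.
have -> : widen_ord (m:=2) (leqnSn 1) ord0 = 0 by apply: val_inj.
have -> : (ord_max : 'I_2) = 1 by apply: val_inj.
case: j => [[|[|//]] Hj] /=; ring.
Qed.

Lemma rv2P (K : fieldType) (u v : 'rV[K]_2) : u 0 0 = v 0 0 -> u 0 1 = v 0 1 -> u = v.
Proof.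
move=> h0 h1; apply/rowP => j; case: j => [[|[|//]] Hj].
  by rewrite (_ : Ordinal Hj = 0) //; apply: val_inj.
by rewrite (_ : Ordinal Hj = 1) //; apply: val_inj.
Qed.

Theorem lemma3p4 (K : fieldType) (a a' : K) (ha : a != 0) (ha' : a' != 0) :
  evo_iso (A3_mx a) (A3_mx a') <-> a = a'.
Proof.
split; last first.
  move=> <-; exists id; split => //; exact: (Bijective (g:=id)). 
case=> f [lin bij hom].
have f0 : f 0 = 0.
  have H := lin 1 0 0; rewrite !scale1r addr0 in H.
  by apply: (addrI (f 0)); rewrite addr0 -H.
set e1 : 'rV[K]_2 := \row_j (j == 0)%:R.
set e2 : 'rV[K]_2 := \row_j (j == 1)%:R.
have m11 : evo_mul (A3_mx a) e1 e1 = e1.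
  by apply: rv2P; rewrite mulE !mxE /=; ring.
have m12 : evo_mul (A3_mx a) e1 e2 = 0.
  by apply: rv2P; rewrite mulE !mxE /=; ring.
have m22 : evo_mul (A3_mx a) e2 e2 = a *: e1 + e2.
  by apply: rv2P; rewrite mulE !mxE /=; ring.
have h11 := hom e1 e1; rewrite m11 in h11.
have h12 := hom e1 e2; rewrite m12 in h12; rewrite f0 in h12.
have h22 := hom e2 e2; rewrite m22 lin in h22.
have ne1 : f e1 != 0.
  apply/eqP => H; have [g gf _] := bij.
  have := congr1 g H; rewrite -f0 !gf => /rowP /(_ 0); rewrite !mxE /= => /eqP.
  by rewrite oner_eq0.
have E1 := congr1 (fun v : 'rV[K]_2 => v 0 0) h11; have E2 := congr1 (fun v : 'rV[K]_2 => v 0 1) h11.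
have E3 := congr1 (fun v : 'rV[K]_2 => v 0 0) h12; have E4 := congr1 (fun v : 'rV[K]_2 => v 0 1) h12.
have E5 := congr1 (fun v : 'rV[K]_2 => v 0 0) h22; have E6 := congr1 (fun v : 'rV[K]_2 => v 0 1) h22.
move: E1 E2 E3 E4 E5 E6 => /=; rewrite !mulE !mxE /=.
move=> /esym E1 /esym E2 /esym E3 /esym E4 /esym E5 /esym E6.
have hne : f e1 0 0 = 0 -> f e1 0 1 = 0 -> False.
  by move=> h0 h1; case/eqP: ne1; apply: rv2P; rewrite mxE.
move: (f e1 0 0) (f e1 0 1) (f e2 0 0) (f e2 0 1) E1 E2 E3 E4 E5 E6 hne.
move=> p q r s E1 E2 E3 E4 E5 E6 hne.
have q0 : q = 0.
  have : q * (q - 1) = 0 by rewrite mulrBr mulr1 E2 subrr.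
  move/eqP; rewrite mulf_eq0 subr_eq0 => /orP [/eqP //|/eqP q1].
  subst q; rewrite mul1r in E4; subst s.
  by move/eqP: E6; rewrite mulr0 mulr1 addr0 eq_sym (negbTE ha).
subst q.
rewrite mul0r mulr0 addr0 in E1.
have p1 : p = 1.
  have : p * (p - 1) = 0 by rewrite mulrBr mulr1 E1 subrr.
  move/eqP; rewrite mulf_eq0 subr_eq0 => /orP [/eqP p0|/eqP //].
  by case: hne.
subst p.
rewrite mul1r mul0r mulr0 addr0 in E3; subst r.
rewrite mulr0 add0r in E6.
rewrite mulr0 mulr1 addr0 add0r in E5.
have s1 : s = 1.
  have : s * (s - 1) = 0 by rewrite mulrBr mulr1 E6 subrr.
  move/eqP; rewrite mulf_eq0 subr_eq0 => /orP [/eqP s0|/eqP //].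
  by subst s; move/eqP: E5; rewrite mulr0 mulr0 eq_sym (negbTE ha).
by subst s; rewrite mulr1 mulr1 in E5.
Qed.
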